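(* For every $F\in\mathbb{N}^d$, $N(F)\le\sqrt{3}^{\,\|F\|}$.
   Context: $\mathbb{N}=\{0,1,2,\dots\}$. A GNS is a submonoid $S\subseteq\mathbb{N}^d$ with finite complement $\mathcal{H}(S)=\mathbb{N}^d\setminus S$. A Frobenius GNS with Frobenius gap $F$ is a GNS such that $F$ is the unique maximal element of $\mathcal{H}(S)$ for the natural partial order. $N(F)$ is the number of Frobenius GNS $S\subseteq\mathbb{N}^d$ with Frobenius gap $F$. $\|F\|=\prod_{i=1}^d(F^{(i)}+1)$. *)

(* Defs.v *)
From HB Require Import structures.
From mathcomp Require Import all_boot all_order all_algebra.
From mathcomp Require Export finmap.
Set Implicit Arguments. Unset Strict Implicit. Unset Printing Implicit Defensive.
Import Order.TTheory GRing.Theory Num.Theory.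

Local Open Scope fset_scope.

Definition vec (d : nat) := (d.-tuple nat)%type.

Definition vzero (d : nat) : vec d := [tuple 0%N | i < d].
Definition vadd (d : nat) (x y : vec d) : vec d := [tuple (tnth x i + tnth y i)%N | i < d].
Definition vle (d : nat) (x y : vec d) : bool := [forall i, tnth x i <= tnth y i].
Definition vlt (d : nat) (x y : vec d) : bool := vle x y && (x != y).

(* A GNS S ⊆ N^d with finite complement is encoded by its (finite) set of gaps
   H = H(S); then S = N^d \ H.  S is a submonoid iff 0 ∉ H and S is closed
   under addition. *)
Definition is_GNS (d : nat) (H : {fset vec d}) : Prop :=
  vzero d \notin H /\
  (forall x y : vec d, x \notin H -> y \notin H -> vadd x y \notin H).

Definition unique_maximal (d : nat) (H : {fset vec d}) (F : vec d) : Prop :=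
  [/\ F \in H,
      (forall h, h \in H -> ~~ vlt F h) &
      (forall m, m \in H -> (forall h, h \in H -> ~~ vlt m h) -> m = F)].

Definition Frobenius_GNS (d : nat) (F : vec d) (H : {fset vec d}) : Prop :=
  is_GNS H /\ unique_maximal H F.

Definition normF (d : nat) (F : vec d) : nat := (\prod_(i < d) (tnth F i).+1)%N.

(* Main.v *)
Require Import Defs.
From HB Require Import structures.
From mathcomp Require Import all_boot all_order all_algebra.
From mathcomp Require Import finmap.
From mathcomp Require Import zify.
Import Order.TTheory GRing.Theory Num.Theory.
Set Implicit Arguments. Unset Strict Implicit. Unset Printing Implicit Defensive.

Lemma all2_nthP (s t : seq nat) : size s = size t ->
  reflect (forall i, i < size s -> nth 0 s i <= nth 0 t i) (all2 leq s t).
Proof.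
elim: s t => [|a s IH] [|b t] //= e; first by constructor.
case: e => /IH IHs; apply: (iffP andP) => [[h1 /IHs h2] [|i] //= hi|h].
  by apply: h2.
split; first exact: (h 0).
by apply/IHs => i hi; apply: (h i.+1).
Qed.

Fixpoint boxseq (b : seq nat) : seq (seq nat) :=
  match b with
  | [::] => [:: [::]]
  | c :: b' => [seq x :: y | x <- iota 0 c.+1, y <- boxseq b']
  end.

Lemma mem_boxseq b y : (y \in boxseq b) = (size y == size b) && all2 leq y b.
Proof.
elim: b y => [|c b IH] y.
  by case: y.
apply/allpairsP/idP => [[[a y'] [ha hy' ->]]|].
  move: hy'; rewrite IH => /andP [e h]; rewrite mem_iota in ha.
  by rewrite /= eqSS e h andbT; move: ha => /= ha; lia.
case: y => //= a y' /andP [e /andP [ha hy]].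
exists (a, y'); split; first by change (a \in iota 0 c.+1); rewrite mem_iota; lia.
  by change (y' \in boxseq b); rewrite IH -eqSS e hy.
by [].
Qed.

Lemma size_boxseq b : size (boxseq b) = \prod_(0 <= i < size b) (nth 0 b i).+1.
Proof.
elim: b => [|c b IH]; first by rewrite big_mkord big_ord0.
change (size [seq x :: y | x <- iota 0 c.+1, y <- boxseq b] = \prod_(0 <= i < (size b).+1) (nth 0 (c :: b) i).+1).
by rewrite size_allpairs size_iota IH big_nat_recl.
Qed.

Lemma uniq_boxseq b : uniq (boxseq b).
Proof.
elim: b => [|c b IH] //.
change (uniq [seq x :: y | x <- iota 0 c.+1, y <- boxseq b]).
apply: allpairs_uniq => //; first exact: iota_uniq.
by move=> [a1 y1] [a2 y2] _ _ /= [-> ->].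
Qed.

Section Vec.
Variables (d : nat) (F : vec d).

Definition sgF (x : vec d) : vec d := [tuple (tnth F i - tnth x i)%N | i < d].
Definition boxL : seq (vec d) := pmap insub (boxseq F).

Lemma vle_all2 (x : vec d) : vle x F = all2 leq x F.
Proof.
have e : size x = size F by rewrite !size_tuple.
apply/forallP/(all2_nthP e) => [h i hi|h i].
  have hi' : i < d by rewrite size_tuple in hi.
  by have := h (Ordinal hi'); rewrite !(tnth_nth 0).
by rewrite !(tnth_nth 0); apply: h; rewrite size_tuple.
Qed.

Lemma mem_boxL x : (x \in boxL) = vle x F.
Proof. by rewrite /boxL mem_pmap_sub mem_boxseq vle_all2 !size_tuple eqxx. Qed.

Lemma uniq_boxL : uniq boxL.
Proof. exact/pmap_sub_uniq/uniq_boxseq. Qed.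

Lemma size_boxL : size boxL <= normF F.
Proof.
rewrite /boxL size_pmap; apply: (leq_trans (count_size _ _)).
rewrite size_boxseq /normF size_tuple big_mkord.
by apply: eq_leq; apply: eq_bigr => i _; rewrite (tnth_nth 0).
Qed.

Lemma vadd_sg x : vle x F -> vadd x (sgF x) = F.
Proof.
move/forallP => h; apply: eq_from_tnth => i.
by rewrite /vadd /sgF !tnth_mktuple subnKC.
Qed.

Lemma sg_le x : vle (sgF x) F.
Proof. by apply/forallP => i; rewrite tnth_mktuple leq_subr. Qed.

Lemma sg_inv x : vle x F -> sgF (sgF x) = x.
Proof.
move/forallP => h; apply: eq_from_tnth => i.
by rewrite /sgF !tnth_mktuple subKn.
Qed.

Definition wt (x : vec d) := (\sum_(i < d) tnth x i)%N.

Lemma vle_trans (x y z : vec d) : vle x y -> vle y z -> vle x z.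
Proof.
move=> /forallP h1 /forallP h2; apply/forallP => i; exact: leq_trans (h1 i) (h2 i).
Qed.

Lemma vle_refl (x : vec d) : vle x x.
Proof. by apply/forallP. Qed.

Lemma vlt_wt (x y : vec d) : vlt x y -> wt x < wt y.
Proof.
move=> /andP [/forallP h ne].
have [i hi] : exists i, tnth x i < tnth y i.
  case: (boolP [exists i, tnth x i != tnth y i]) => [/existsP [i hi]|/existsPn h'].
    by exists i; rewrite ltn_neqAle hi h.
  by case/negP: ne; apply/eqP/eq_from_tnth => i; apply/eqP; have := h' i; rewrite negbK.
rewrite /wt (bigD1 i) //= [X in _ < X](bigD1 i) //=.
have : (\sum_(j < d | j != i) tnth x j <= \sum_(j < d | j != i) tnth y j)%N.
  by apply: leq_sum => j _; apply: h.
by move=> hs; rewrite -addSn; apply: leq_add.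
Qed.

Lemma le_sum_mem (T : eqType) (f : T -> nat) (s : seq T) x :
  x \in s -> f x <= \sum_(y <- s) f y.
Proof.
elim: s => //= y s IH; rewrite inE big_cons => /orP [/eqP ->|/IH]; lia.
Qed.

Lemma gap_le (H : {fset vec d}) : unique_maximal H F -> forall h, h \in H -> vle h F.
Proof.
move=> [FH nomax uq] h hH.
set W := \sum_(y <- enum_fset H) wt y.
suff: forall k m, m \in H -> vle h m -> W - wt m <= k -> vle h F.
  by move/(_ (W - wt h) h hH (vle_refl h)); apply.
elim=> [|k IH] m mH hm hk;
case: (boolP (has (vlt m) (enum_fset H))) => [/hasP [m' m'H lt]|/hasPn nm].
- have := vlt_wt lt; have : wt m' <= W by apply: le_sum_mem.
  lia.
- by rewrite -(uq m mH nm).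
- apply: (IH m') => //; first by apply: vle_trans hm _; case/andP: lt.
  have := vlt_wt lt; have : wt m' <= W by apply: le_sum_mem.
  lia.
- by rewrite -(uq m mH nm).
Qed.

Lemma pair_cond (H : {fset vec d}) : Frobenius_GNS F H ->
  forall z, vle z F -> (z \in H) || (sgF z \in H).
Proof.
move=> [[_ cl] [FH _ _]] z hz.
case: (boolP (z \in H)) => //= zH; apply/negPn/negP => szH.
by have := cl _ _ zH szH; rewrite vadd_sg // FH.
Qed.

End Vec.

Lemma count3 (A : eqType) (s : seq A) (a b : A -> bool) :
  (forall H, H \in s -> a H || b H) ->
  size s = count (fun H => a H && ~~ b H) s + count (fun H => ~~ a H && b H) s
           + count (fun H => a H && b H) s.
Proof.
elim: s => //= H s IH Hc.
rewrite IH; last by move=> H' h; apply: Hc; rewrite inE h orbT.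
have := Hc H (mem_head _ _).
case: (a H); case: (b H) => //= _; lia.
Qed.

Local Open Scope fset_scope.

Section Count.
Variables (T : choiceType) (sg : T -> T).

Definition good (L : seq T) (H : {fset T}) :=
  {subset H <= L} /\ (forall z, z \in L -> (z \in H) || (sg z \in H)).
Definition closedL (L : seq T) :=
  uniq L /\ (forall z, z \in L -> (sg z \in L) /\ sg (sg z) = z).

Lemma remove_good L L' x H : closedL L -> x \in L ->
  (forall z, (z \in L') = [&& z != x, z != sg x & z \in L]) ->
  good L H -> good L' (H `\ x `\ sg x).
Proof.
move=> [uL cL] xL mL' [sH cH]; split.
  move=> z; rewrite !in_fsetD1 mL' => /and3P [-> -> /sH ->]; by [].
move=> z; rewrite mL' => /and3P [zx zsx zL].
have [sxL ssx] := cL x xL; have [szL ssz] := cL z zL.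
have h1 : sg z != sg x by apply: contra zx => /eqP e; rewrite -ssz e ssx.
have h2 : sg z != x by apply: contra zsx => /eqP e; rewrite -ssz e.
by rewrite !in_fsetD1 zx zsx h1 h2 /=; apply: cH.
Qed.

Lemma remove_closed L L' x : closedL L -> x \in L -> uniq L' ->
  (forall z, (z \in L') = [&& z != x, z != sg x & z \in L]) -> closedL L'.
Proof.
move=> [uL cL] xL uL' mL'; split => // z; rewrite mL' => /and3P [zx zsx zL].
have [sxL ssx] := cL x xL; have [szL ssz] := cL z zL.
have h1 : sg z != sg x by apply: contra zx => /eqP e; rewrite -ssz e ssx.
have h2 : sg z != x by apply: contra zsx => /eqP e; rewrite -ssz e.
by rewrite mL' h1 h2 szL.
Qed.

Lemma class_bound L L' x (bx by_ : bool) (s : seq {fset T}) :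
  closedL L -> x \in L ->
  (forall z, (z \in L') = [&& z != x, z != sg x & z \in L]) ->
  (forall s', uniq s' -> (forall H, H \in s' -> good L' H) ->
     size s' ^ 2 <= 3 ^ size L') ->
  uniq s -> (forall H, H \in s -> [/\ good L H, (x \in H) = bx & (sg x \in H) = by_]) ->
  size s ^ 2 <= 3 ^ size L'.
Proof.
move=> cL xL mL' IH us hs.
rewrite -(size_map (fun H => H `\ x `\ sg x)); apply: IH.
  rewrite map_inj_in_uniq // => H1 H2 /hs [_ a1 b1] /hs [_ a2 b2] e.
  apply/fsetP => z; have := congr1 (fun A => z \in A) e; rewrite /= !in_fsetD1.
  case: (z =P sg x) => [->|_]; first by rewrite b1 b2.
  case: (z =P x) => [->|_]; first by rewrite a1 a2.
  by [].
by move=> H' /mapP [H /hs [gH _ _] ->]; exact: (remove_good cL xL mL' gH).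
Qed.

Lemma count_main n : forall L s, size L <= n -> closedL L -> uniq s ->
  (forall H, H \in s -> good L H) -> size s ^ 2 <= 3 ^ size L.
Proof.
elim: n => [|n IHn] L s.
  case: L => // _ _ us hs; rewrite expn0.
  have : size s <= size [:: (fset0 : {fset T})].
    apply: uniq_leq_size => // H /hs [sH _]; rewrite inE; apply/eqP/fsetP => z.
    by rewrite in_fset0; apply/negP => /sH.
  by case: s {us hs} => [|? [|]].
case: L => [|x L0] hn cL us hs.
  have : size s <= size [:: (fset0 : {fset T})].
    apply: uniq_leq_size => // H /hs [sH _]; rewrite inE; apply/eqP/fsetP => z.
    by rewrite in_fset0; apply/negP => /sH.
  by case: s {us hs} => [|? [|]].
set L := x :: L0 in cL hs *.
have xL : x \in L by rewrite mem_head.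
have [uL cLL] := cL.
have [sxL ssx] := cLL x xL.
have IHn' : forall L', size L' <= n -> uniq L' ->
   (forall z, (z \in L') = [&& z != x, z != sg x & z \in L]) ->
   forall s', uniq s' -> (forall H, H \in s' -> good L' H) -> size s' ^ 2 <= 3 ^ size L'.
  move=> L' hL' uL' mL' s' us' hs'; apply: IHn => //.
  exact: remove_closed mL'.
case: (eqVneq (sg x) x) => esx.
  have mL' : forall z, (z \in rem x L) = [&& z != x, z != sg x & z \in L].
    by move=> z; rewrite (mem_rem_uniq _ uL) esx inE andbA andbb.
  have szL' : size (rem x L) = (size L).-1 by rewrite size_rem.
  apply: (@leq_trans (3 ^ size (rem x L))); last by rewrite leq_exp2l // szL' /=.
  have hL' : size (rem x L) <= n by rewrite szL'.
  apply: (class_bound (bx:=true) (by_:=true) cL xL mL' (IHn' _ hL' (rem_uniq _ uL) mL') us).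
  move=> H hH; have [sH cH] := hs H hH; have := cH x xL; rewrite esx orbb => ->.
  by split.
set L' := rem (sg x) (rem x L).
have sxL0 : sg x \in rem x L by rewrite (mem_rem_uniq _ uL) inE esx.
have uL' : uniq L' by rewrite /L' !rem_uniq.
have mL' : forall z, (z \in L') = [&& z != x, z != sg x & z \in L].
  move=> z; rewrite /L' (mem_rem_uniq _ (rem_uniq _ uL)) inE (mem_rem_uniq _ uL) inE.
  by case: (z != x); case: (z != sg x).
have szL' : size L = (size L').+2.
  have h1 := size_rem sxL0; have h2 := size_rem xL.
  have h3 : 0 < size (rem x L) by case: (rem x L) sxL0.
  rewrite /L' h1; rewrite h2 in h3 *; move: h3; rewrite /L /=; lia.
have B : forall bx by_, size [seq H <- s | ((x \in H) == bx) && ((sg x \in H) == by_)] ^ 2 <= 3 ^ size L'.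
  move=> bx by_; apply: (class_bound (bx:=bx) (by_:=by_) cL xL mL' (IHn' _ _ uL' mL')).
  - by move: hn; rewrite szL' /=; lia.
  - exact: filter_uniq.
  move=> H; rewrite mem_filter => /andP [/andP [/eqP a /eqP b] /hs g]; by split.
have E := @count3 _ s (fun H => x \in H) (fun H => sg x \in H).
rewrite E; last first.
  by move=> H /hs [_ cH]; exact: (cH x xL).
have B1 := B true false; have B2 := B false true; have B3 := B true true.
rewrite !size_filter in B1 B2 B3.
have e1 : count (fun H => (x \in H) && ~~ (sg x \in H)) s = count (fun H => ((x \in H) == true) && ((sg x \in H) == false)) s.
  by apply: eq_count => H; case: (x \in H); case: (sg x \in H).
have e2 : count (fun H => ~~ (x \in H) && (sg x \in H)) s = count (fun H => ((x \in H) == false) && ((sg x \in H) == true)) s.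
  by apply: eq_count => H; case: (x \in H); case: (sg x \in H).
have e3 : count (fun H => (x \in H) && (sg x \in H)) s = count (fun H => ((x \in H) == true) && ((sg x \in H) == true)) s.
  by apply: eq_count => H; case: (x \in H); case: (sg x \in H).
rewrite e1 e2 e3 szL' !expnS.
move: B1 B2 B3; set a := count _ s; set b := count _ s; set c := count _ s; set t := 3 ^ _.
move=> B1 B2 B3; nia.
Qed.
End Count.

Theorem lemma6p1 (R : rcfType) (d : nat) (F : vec d) :
  forall s : seq {fset vec d},
    uniq s -> (forall H, H \in s -> Frobenius_GNS F H) ->
    ((size s)%:R <= Num.sqrt (3 : R) ^+ normF F)%R.
Proof.
move=> s us hs.
set L := boxL F.
have cL : closedL (sgF F) L.
  split; first exact: uniq_boxL.
  by move=> z; rewrite mem_boxL => hz; rewrite mem_boxL sg_le sg_inv.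
have gL : forall H, H \in s -> good (sgF F) L H.
  move=> H /hs HF; split.
    by move=> z zH; rewrite mem_boxL; exact: (gap_le (proj2 HF) zH).
  by move=> z; rewrite mem_boxL; exact: (pair_cond HF).
have hc := @count_main _ (sgF F) (size L) L s (leqnn _) cL us gL.
have hc' : (size s ^ 2 <= 3 ^ normF F)%N.
  by apply: leq_trans hc (leq_pexp2l _ (size_boxL F)).
have s0 : (0 <= Num.sqrt (3:R))%R := sqrtr_ge0 _.
rewrite -(@ler_pXn2r _ 2) // ?inE ?exprn_ge0 ?ler0n //.
rewrite -exprM mulnC exprM sqr_sqrtr // -!natrX ler_nat.
exact: hc'.
  by rewrite nnegrE ler0n.
by rewrite nnegrE exprn_ge0.
Qed.
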